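(* Let $p>2$ be a prime, $d\geq 2$ an integer with $d\mid p-1$, $f=(p-1)/d$, and $\omega$ a fixed generator of $\mathbb{F}_p^*$. Let $\theta=0$ if $f$ is even and $\theta=d/2$ if $f$ is odd. Let $\zeta\in\mathbb{C}$ be a primitive $p$-th root of unity and, for $i\in\mathbb{Z}/d\mathbb{Z}$, let $\eta_i=\sum_{k=0}^{f-1}\zeta^{\omega^{kd+i}}$. For $i,j\in\mathbb{Z}/d\mathbb{Z}$ let $(i,j)=\#\{(u,v):0\leq u,v\leq f-1,\ 1+\omega^{du+i}\equiv\omega^{dv+j}\pmod p\}$. For integers $k\geq 0$ and $0\leq\nu\leq d-1$ put $n(k,\nu)=\sum_{i=0}^{d-1}\eta_i^k\,\eta_{i+\nu}$ (indices mod $d$). Then for every $0\leq\nu\leq d-1$: \[ n(1,\nu)+f=p\,\delta_{\theta\nu},\qquad n(2,\nu)+f^2=p\,(\nu,\theta), \] \[ n(3,\nu)+f^3=p\sum_{i=0}^{d-1}(\nu,i)(i,\theta)+f\,\delta_{\theta0}\,[n(1,\nu)+f], \] \[ n(4,\nu)+f^4=p\sum_{i,j=0}^{d-1}(\nu,i)(i,j)(j,\theta)+f\,\delta_{\theta0}\,[n(2,\nu)+f^2]+f\,(0,\theta)\,[n(1,\nu)+f], \] and for every $k\geq 5$, \[ n(k,\nu)+f^k=p\sum_{i_2,\dots,i_{k-1}=0}^{d-1}(\nu,i_2)(i_2,i_3)\cdots(i_{k-1},\theta)+f\,\delta_{\theta0}\,[n(k-2,\nu)+f^{k-2}]+f\,(0,\theta)\,[n(k-3,\nu)+f^{k-3}]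 \] \[ \qquad+\sum_{j=4}^{k-1}f\Big[\sum_{i_2,\dots,i_{j-2}=0}^{d-1}(0,i_2)(i_2,i_3)\cdots(i_{j-2},\theta)\Big]\,[n(k-j,\nu)+f^{k-j}], \] where $\delta$ denotes the Kronecker delta.
   Context: Indices of $\eta_i$ and of the cyclotomic numbers $(i,j)$ are taken modulo $d$. For $j=4$ the inner sum is $\sum_{i_2=0}^{d-1}(0,i_2)(i_2,\theta)$. *)

(* Defs.v *)
From mathcomp Require Import all_boot all_order all_algebra.
From mathcomp Require Import algC.

Import Order.TTheory GRing.Theory Num.Theory.
Local Open Scope ring_scope.

Definition fdeg (p d : nat) : nat := (p.-1 %/ d)%N.

Definition theta (p d : nat) : nat := if odd (fdeg p d) then d./2 else 0%N.

(* Gaussian period eta_i = sum_{k=0}^{f-1} zeta^(omega^(k d + i)), index i taken mod d.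
   The exponent omega^(kd+i) in F_p is represented by its canonical residue in [0,p). *)
Definition eta (p d : nat) (omega : 'F_p) (zeta : algC) (i : nat) : algC :=
  \sum_(k < fdeg p d) zeta ^+ (nat_of_ord (omega ^+ (k * d + i %% d)%N)).

Definition cyc (p d : nat) (omega : 'F_p) (i j : nat) : nat :=
  #|[set uv : 'I_(fdeg p d) * 'I_(fdeg p d) |
      1 + omega ^+ (d * uv.1 + i %% d)%N == omega ^+ (d * uv.2 + j %% d)%N]|.

Definition nkn (p d : nat) (omega : 'F_p) (zeta : algC) (k nu : nat) : algC :=
  \sum_(i < d) eta p d omega zeta i ^+ k * eta p d omega zeta (i + nu)%N.

Fixpoint chain (p d : nat) (omega : 'F_p) (m a b : nat) : nat :=
  match m with
  | 0 => cyc p d omega a b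
  | m'.+1 => (\sum_(i < d) cyc p d omega a i * chain p d omega m' i b)%N
  end.

(* Main.v *)
Require Import Defs.
From mathcomp Require Import all_boot all_order all_algebra.
From mathcomp Require Import algC.
From mathcomp Require Import finfield zify ring.
Import Order.TTheory GRing.Theory Num.Theory.
Local Open Scope ring_scope.

Lemma tri (u v w : nat -> algC) m :
  \sum_(j < m.+1) u j * \sum_(i < (m - j).+1) v i * w (m - j - i)%N =
  \sum_(j < m.+1) v j * \sum_(i < (m - j).+1) u i * w (m - j - i)%N.
Proof.
pose P (g : nat -> algC) : {poly algC} := \poly_(i < m.+1) g i.
have key (a b e : nat -> algC) :
  (P a * (P b * P e))`_m = \sum_(j < m.+1) a j * \sum_(i < (m - j).+1) b i * e (m - j - i)%N.
  rewrite coefM; apply: eq_bigr => j _; rewrite coefM coef_poly ltn_ord; congr (_ * _).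
  apply: eq_bigr => i _; rewrite !coef_poly.
  have hj := ltn_ord j; have hi := ltn_ord i.
  have -> : (i < m.+1)%N by lia.
  have -> : (m - j - i < m.+1)%N by lia.
  by [].
rewrite -(key u v w) -(key v u w).
by rewrite mulrCA.
Qed.

Set Implicit Arguments.
Unset Strict Implicit.
Section L.
Variables (p d : nat) (omega : 'F_p) (zeta : algC).
Hypotheses (pp : prime p) (p2 : (2 < p)%N) (d2 : (2 <= d)%N) (dd : (d %| p.-1)%N)
  (Hom : (p.-1).-primitive_root omega) (Hz : p.-primitive_root zeta).

Local Notation f := (fdeg p d).

Lemma pfd : p.-1 = (f * d)%N.
Proof. by rewrite /fdeg divnK. Qed.

Lemma f_gt0 : (0 < f)%N.
Proof. have := pfd; case: (f) => //= ; lia. Qed.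

Definition chi (x : 'F_p) : algC := zeta ^+ (nat_of_ord x).

Lemma chiD x y : chi (x + y) = chi x * chi y.
Proof.
rewrite /chi -exprD.
have -> : nat_of_ord (x + y) = ((x + y) %% (Zp_trunc (pdiv p)).+2)%N by [].
have -> : ((x + y) %% (Zp_trunc (pdiv p)).+2 = (x + y) %% p)%N.
  by congr (_ %% _)%N; exact: Fp_cast.
by rewrite (prim_expr_mod Hz).
Qed.

Lemma chi0 : chi 0 = 1.
Proof. by rewrite /chi expr0. Qed.

Lemma sum_chi : \sum_(x : 'F_p) chi x = 0.
Proof.
have z1 : zeta != 1.
  apply/eqP => z1; have := prim_order_dvd Hz 1; rewrite expr1 z1 eqxx dvdn1 => H.
  have : p == 1%N by rewrite H.
  move/eqP; lia.
have : (zeta - 1) * \sum_(x : 'F_p) chi x = 0.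
  rewrite /chi.
  have -> : \sum_(x : 'F_p) zeta ^+ (nat_of_ord x) = \sum_(i < (Zp_trunc (pdiv p)).+2) zeta ^+ i by [].
  by rewrite -subrX1 Fp_cast // prim_expr_order // subrr.
by move/eqP; rewrite mulf_eq0 subr_eq0 (negbTE z1) => /eqP.
Qed.

Definition K (i : nat) : {set 'F_p} := [set omega ^+ (k * d + i %% d)%N | k : 'I_f].

Lemma exp_inj m n : (m < p.-1)%N -> (n < p.-1)%N -> omega ^+ m = omega ^+ n -> m = n.
Proof.
move=> hm hn /eqP; rewrite (eq_prim_root_expr Hom) !modn_small //; exact/eqP.
Qed.

Lemma memK m i : (omega ^+ m \in K i) = (m %% d == i %% d)%N.
Proof.
apply/imsetP/idP.
  case=> k _ /eqP; rewrite (eq_prim_root_expr Hom) => /eqP H.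
  have := congr1 (fun t => t %% d)%N H; rewrite !modn_dvdm // => ->.
  by rewrite modnMDl modn_mod.
move=> /eqP H.
have hk : ((m %% p.-1) %/ d < f)%N.
  rewrite ltn_divLR; last lia.
  by rewrite -pfd ltn_mod; lia.
exists (Ordinal hk) => //.
rewrite /= -H -{1}(prim_expr_mod Hom m); congr (_ ^+ _).
by rewrite -(modn_dvdm m dd) -divn_eq.
Qed.

Lemma omega_nz : omega != 0.
Proof. by rewrite (prim_root_eq0 Hom); lia. Qed.

Lemma nz_exp x : x != 0 -> exists m, x = omega ^+ m.
Proof.
move=> xn0.
have h : x ^+ p.-1 = 1.
  have e : #|'F_p| = (p.-1).+1 by rewrite card_Fp // prednK // prime_gt0.
  have := expf_card x; rewrite e exprS.
  by move=> h; apply: (mulfI xn0); rewrite mulr1.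
by have [i ->] := prim_rootP Hom h; exists i.
Qed.

Lemma K_nz x i : x \in K i -> x != 0.
Proof. by case/imsetP=> k _ ->; rewrite expf_neq0 // omega_nz. Qed.

Lemma K_exp x i : x \in K i -> exists2 m, x = omega ^+ m & (m %% d = i %% d)%N.
Proof.
move=> xK; have [m xm] := nz_exp (K_nz xK).
by exists m => //; apply/eqP; rewrite -memK -xm.
Qed.

Lemma KM x y i j : x \in K i -> y \in K j -> x * y \in K (i + j).
Proof.
move=> /K_exp [a -> ha] /K_exp [b -> hb].
by rewrite -exprD memK -modnDm ha hb modnDm.
Qed.

Lemma KD x y i j : x \in K i -> y \in K (i + j) -> y / x \in K j.
Proof.
move=> xK yK.
have yx0 : y / x != 0 by rewrite mulf_neq0 ?invr_eq0 ?(K_nz xK) ?(K_nz yK).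
have [t ht] := nz_exp yx0.
move: (xK) => /K_exp [a ea ha]; move: (yK) => /K_exp [b eb hb].
have : omega ^+ (a + t) \in K (i + j).
  by rewrite exprD -ea -ht mulrC divfK ?(K_nz xK).
rewrite memK ht memK => /eqP h2.
rewrite -(eqn_modDl i) -h2 -modnDml -ha modnDml.
by [].
Qed.

Lemma K_uniq x i j : x \in K i -> x \in K j -> (i %% d = j %% d)%N.
Proof. by move=> /K_exp [m -> hm]; rewrite memK => /eqP <-. Qed.

Lemma K_mod i : K (i %% d) = K i.
Proof. by rewrite /K modn_mod. Qed.

Lemma K_inj i : injective (fun k : 'I_f => omega ^+ (k * d + i %% d)%N).
Proof.
have hd : (0 < d)%N by lia.
move=> k1 k2 /exp_inj H; apply/val_inj/eqP.
have lt (k : 'I_f) : (k * d + i %% d < p.-1)%N.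
  rewrite pfd; have := ltn_pmod i hd; have := ltn_ord k.
  move=> h1 h2; apply: (@leq_trans (k.+1 * d)); first by rewrite mulSn; lia.
  by rewrite leq_mul2r h1 orbT.
move: (H (lt k1) (lt k2)) => /eqP; rewrite eqn_add2r eqn_mul2r => /orP [/eqP|/eqP] //; lia.
Qed.

Lemma card_K i : #|K i| = f.
Proof. by rewrite card_imset ?card_ord //; apply: K_inj. Qed.

Lemma big_K (R : Type) (idx : R) (op : Monoid.com_law idx) (F : 'F_p -> R) i :
  \big[op/idx]_(x in K i) F x = \big[op/idx]_(k < f) F (omega ^+ (k * d + i %% d)%N).
Proof. by rewrite big_imset //; move=> a b _ _; apply: K_inj. Qed.

Lemma big_K_shift (F : 'F_p -> algC) w i l : w \in K l ->
  \sum_(x in K i) F (x * w) = \sum_(y in K (i + l)) F y.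
Proof.
move=> wK.
have -> : K (i + l) = [set x * w | x in K i].
  apply/setP => y; apply/idP/imsetP.
    move=> yK; exists (y / w); first by apply: (KD wK); rewrite addnC.
    by rewrite divfK ?(K_nz wK).
  by case=> x xK ->; apply: KM.
symmetry; rewrite big_imset //; move=> a b _ _; apply: mulIf; exact: (K_nz wK).
Qed.

Lemma eta_K i : eta p d omega zeta i = \sum_(x in K i) chi x.
Proof. by rewrite big_K. Qed.

Lemma cyc_K a b : cyc p d omega a b = (\sum_(x in K a) ((1 + x)%R \in K b))%N.
Proof.
rewrite big_K /cyc -sum1_card big_mkcond /=.
transitivity (\sum_(u < f) \sum_(v < f)
   ((1 + omega ^+ (d * u + a %% d))%R == omega ^+ (d * v + b %% d) : nat))%N.
  rewrite pair_bigA; apply: eq_bigr => -[u v] _; rewrite inE /=; by case: ifP.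
apply: eq_bigr => u _.
rewrite (eq_bigr (fun v : 'I_f => (1 + omega ^+ (u * d + a %% d) == omega ^+ (v * d + b %% d) : nat)));
  last by move=> v _; rewrite !(mulnC d).
case: (boolP (1 + omega ^+ (u * d + a %% d) \in K b)) => [/imsetP [v _ ev] | nK].
  rewrite (bigD1 v) //= ev eqxx big1 // => v' hv'; apply/eqP; rewrite eqb0.
  by apply/negP => /eqP /K_inj ev'; rewrite ev' eqxx in hv'.
rewrite big1 // => v _; apply/eqP; rewrite eqb0; apply: contra nK => /eqP ->.
by apply/imsetP; exists v.
Qed.

Local Notation eta' := (eta p d omega zeta).
Local Notation n := (nkn p d omega zeta).
Local Notation c := (cyc p d omega).
Definition delta a : algC := (-1 \in K a)%:R.

Lemma single y : y != 0 ->
  exists2 l0, (l0 < d)%N & forall l, (l < d)%N -> (y \in K l) = (l == l0).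
Proof.
move=> /nz_exp [m ->]; exists (m %% d)%N; first by rewrite ltn_mod; lia.
by move=> l hl; rewrite memK (modn_small hl) eq_sym.
Qed.

Lemma sum_single y (F : nat -> algC) : y != 0 ->
  exists2 l0, y \in K l0 & \sum_(l < d) (y \in K l)%:R * F l = F l0.
Proof.
move=> /single [l0 hl0 H]; exists l0; first by rewrite H ?eqxx.
rewrite (bigD1 (Ordinal hl0)) //= H // eqxx mul1r big1 ?addr0 // => l hl.
rewrite H //.
have -> : (nat_of_ord l == l0) = false.
  by apply/negbTE; apply: contra hl => /eqP h; apply/eqP; apply: val_inj.
by rewrite mul0r.
Qed.

Lemma notK0 l : (0 \in K l) = false.
Proof. by apply/negbTE/negP => /K_nz; rewrite eqxx. Qed.

Lemma sum_m1 a : \sum_(z in K a) (z == -1)%:R = delta a.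
Proof.
rewrite /delta; case: (boolP (-1 \in K a)) => h.
  rewrite (bigD1 (-1)) //= eqxx big1 ?addr0 // => z /andP [_ hz].
  by rewrite (negbTE hz).
by rewrite big1 // => z zK; case: eqP => // ez; rewrite -ez zK in h.
Qed.

Lemma eta_mul i a : eta' i * eta' (i + a) =
  f%:R * delta a + \sum_(l < d) (c a l)%:R * eta' (i + l).
Proof.
rewrite !eta_K big_distrl /=.
transitivity (\sum_(x in K i) \sum_(z in K a) chi (x * (1 + z))).
  apply: eq_bigr => x xK; rewrite big_distrr /= addnC.
  rewrite -(big_K_shift (fun y => chi x * chi y) a xK).
  by apply: eq_bigr => z _; rewrite -chiD; congr chi; ring.
rewrite exchange_big /=.
transitivity (\sum_(z in K a) (f%:R * (z == -1)%:R
                + \sum_(l < d) ((1 + z) \in K l)%:R * eta' (i + l))).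
  apply: eq_bigr => z zK; case: (eqVneq z (-1)) => [-> | zn].
    rewrite addrN; under eq_bigr do rewrite mulr0 chi0.
    rewrite sumr_const; have -> : #|K i| = f by apply: card_K.
    rewrite /= mulr1 big1 ?addr0 // => l _.
    by rewrite notK0 mul0r.
  have nz : 1 + z != 0 by rewrite addrC addr_eq0.
  have [l0 hK ->] := sum_single (fun l => eta' (i + l)) nz.
  by rewrite mulr0 add0r (big_K_shift chi i hK) eta_K.
rewrite big_split /= -big_distrr /= sum_m1; congr (_ + _).
rewrite exchange_big /=; apply: eq_bigr => l _.
by rewrite -big_distrl /= cyc_K natr_sum.
Qed.

Definition S k : algC := \sum_(i < d) eta' i ^+ k.

Lemma n_rec k nu : n k.+1 nu = f%:R * delta nu * S k + \sum_(l < d) (c nu l)%:R * n k l.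
Proof.
rewrite /nkn /S.
under eq_bigr => i _ do rewrite exprSr -mulrA eta_mul mulrDr big_distrr /=.
rewrite big_split /= -big_distrl /= mulrC; congr (_ + _).
rewrite exchange_big /=; apply: eq_bigr => l _; rewrite big_distrr /=.
by apply: eq_bigr => i _; rewrite mulrCA.
Qed.

Lemma row_sum a : f%:R = \sum_(l < d) (c a l)%:R + delta a.
Proof.
under eq_bigr do rewrite cyc_K natr_sum.
rewrite exchange_big /= -sum_m1 -big_split /=.
have -> : (f%:R : algC) = \sum_(z in K a) 1 by rewrite sumr_const card_K.
apply: eq_bigr => z zK; case: (eqVneq z (-1)) => [-> | zn].
  by rewrite addrN big1 ?add0r ?eqxx // => l _; rewrite notK0.
have nz : 1 + z != 0 by rewrite addrC addr_eq0.
have [l0 _ h] := sum_single (fun l => 1) nz.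
rewrite ?(negbTE zn) addr0 -[LHS]h.
by apply: eq_bigr => l _; rewrite mulr1.
Qed.

Lemma shift_sum (g : nat -> algC) nu :
  \sum_(i < d) g ((i + nu) %% d)%N = \sum_(i < d) g i.
Proof.
elim: nu => [|nu IH].
  by apply: eq_bigr => i _; rewrite addn0 modn_small.
rewrite -IH.
have : (0 < d)%N by lia.
case: (d) => // d' _.
rewrite big_ord_recr /= big_ord_recl /=.
have -> : ((d' + nu.+1) %% d'.+1 = (0 + nu) %% d'.+1)%N.
  by rewrite addnS -addSn modnDl.
rewrite addrC; congr (_ + _); apply: eq_bigr => i _.
by rewrite /bump /= add1n addnS addSn.
Qed.

Lemma eta_mod i : eta' (i %% d) = eta' i.
Proof. by rewrite !eta_K K_mod. Qed.

Lemma sum_eta nu : \sum_(i < d) eta' (i + nu) = -1.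
Proof.
under eq_bigr do rewrite -eta_mod.
rewrite (shift_sum (fun j => eta' j)).
under eq_bigr do rewrite eta_K big_mkcond /=.
rewrite exchange_big /=.
have h0 := sum_chi; rewrite (bigD1 0) //= in h0.
rewrite (bigD1 0) //= big1; last by move=> l _; rewrite notK0.
rewrite add0r.
have -> : \sum_(x | x != 0) \sum_(l < d) (if x \in K l then chi x else 0)
   = \sum_(x | x != 0) chi x.
  apply: eq_bigr => x xn.
  have [l0 _ h] := sum_single (fun _ => chi x) xn.
  rewrite -h; apply: eq_bigr => l _; by case: (x \in K l); rewrite ?mul1r ?mul0r.
by move: h0; rewrite chi0 addrC => /eqP; rewrite addr_eq0 => /eqP.
Qed.

Lemma theta_mod : ((p.-1)./2 %% d)%N = theta p d.
Proof.
have op : odd p by case: (even_prime pp) => // e; lia.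
have ep : ~~ odd p.-1 by move: op; rewrite -{1}(prednK (prime_gt0 pp)) /=; case: odd.
rewrite /theta pfd; case: ifP => hf.
  have od : ~~ odd d by move: ep; rewrite pfd oddM hf.
  have hd := even_halfK od; set e := d./2 in hd *.
  have hf2 := odd_double_half f; rewrite hf in hf2; set g := f./2 in hf2.
  have -> : (f * d)./2 = (g * d + e)%N.
    have -> : (f * d)%N = (g * d + e).*2 by rewrite -hf2 -hd -!mul2n /=; nia.
    by rewrite doubleK.
  rewrite modnMDl modn_small //; lia.
have hf2 := odd_double_half f; rewrite hf /= add0n in hf2; set g := f./2 in hf2.
by rewrite -hf2 -doubleMl doubleK modnMl.
Qed.

Lemma m1_exp : (-1 : 'F_p) = omega ^+ (p.-1)./2.
Proof.
have op : odd p by case: (even_prime pp) => // e; lia.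
have ep : ~~ odd p.-1 by move: op; rewrite -{1}(prednK (prime_gt0 pp)) /=; case: odd.
have h2 : (omega ^+ (p.-1)./2) ^+ 2 == 1.
  by rewrite -exprM mulnC mul2n even_halfK // prim_expr_order.
move: h2; rewrite sqrf_eq1 => /orP [h1|/eqP -> //].
move: h1; rewrite -(expr0 omega) (eq_prim_root_expr Hom) mod0n.
have hp : (0 < (p.-1)./2 < p.-1)%N.
  have := odd_double_half p.-1; rewrite (negbTE ep) add0n; lia.
by rewrite modn_small; lia.
Qed.

Lemma delta_theta nu : (nu < d)%N -> delta nu = (theta p d == nu)%:R.
Proof.
by move=> hnu; rewrite /delta m1_exp memK theta_mod modn_small.
Qed.

Definition A k nu : algC := n k nu + (f ^ k)%:R.
Definition T k : algC := f%:R * S k + (f ^ k)%:R.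
Definition Tp k : algC := if k is k'.+1 then T k' else 0.
Fixpoint Cs j a : algC :=
  if j is j'.+1 then \sum_(l < d) (c a l)%:R * Cs j' l else delta a.

Lemma CsS j a : Cs j.+1 a = \sum_(l < d) (c a l)%:R * Cs j l.
Proof. by []. Qed.
Lemma Cs0 a : Cs 0 a = delta a.
Proof. by []. Qed.
Arguments Cs : simpl never.

Lemma A0 nu : A 0 nu = 0.
Proof.
rewrite /A /nkn expn0; under eq_bigr do rewrite expr0 mul1r.
by rewrite sum_eta addNr.
Qed.

Lemma A_rec k nu : A k.+1 nu = delta nu * T k + \sum_(l < d) (c nu l)%:R * A k l.
Proof.
have e : ((f ^ k.+1)%:R : algC) = (\sum_(l < d) (c nu l)%:R + delta nu) * (f ^ k)%:R.
  by rewrite expnS natrM -row_sum.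
rewrite /A n_rec e mulrDl big_distrl /= /T /A.
under [in RHS]eq_bigr do rewrite mulrDr.
rewrite big_split /=; ring.
Qed.

Lemma A_closed k nu : A k nu = \sum_(j < k.+1) Cs j nu * Tp (k - j).
Proof.
elim: k nu => [|k IH] nu.
  by rewrite big_ord1 /= mulr0 A0.
rewrite A_rec big_ord_recl /=; congr (_ + _).
under eq_bigr do rewrite IH big_distrr /=.
rewrite exchange_big /=; apply: eq_bigr => j _.
rewrite /bump /= add1n subSS big_distrl /=.
by apply: eq_bigr => l _; rewrite mulrA.
Qed.

Lemma T0 : T 0 = p%:R.
Proof.
rewrite /T /S; under eq_bigr do rewrite expr0.
rewrite sumr_const card_ord expn0 -natrM.
have -> : (p%:R : algC) = ((f * d).+1)%:R by rewrite -pfd prednK // prime_gt0.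
exact: natr1.
Qed.

Lemma TS s : T s.+1 = f%:R * A s 0.
Proof.
rewrite /T /A /S /nkn expnS natrM mulrDr; congr (_ + _); congr (_ * _).
by apply: eq_bigr => i _; rewrite exprSr addn0.
Qed.

Lemma swap_sum m nu :
  \sum_(j < m.+1) Cs j nu * A (m - j) 0 = \sum_(j < m.+1) Cs j 0 * A (m - j) nu.
Proof.
under eq_bigr do rewrite A_closed.
under [RHS]eq_bigr do rewrite A_closed.
exact: (tri (fun j => Cs j nu) (fun j => Cs j 0) Tp m).
Qed.

Lemma A_main m nu : A m.+2 nu = p%:R * Cs m.+1 nu + f%:R * \sum_(j < m.+1) Cs j 0 * A (m - j) nu.
Proof.
rewrite A_closed big_ord_recr big_ord_recr /= subnn subSn // subnn /= T0 mulr0 addr0.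
rewrite -swap_sum addrC [in LHS]mulrC; congr (_ + _).
rewrite big_distrr /=.
apply: eq_bigr => j _.
have hj := ltn_ord j.
rewrite (_ : (m.+2 - j = (m - j).+2)%N); last by lia.
by rewrite /= TS mulrCA.
Qed.

Lemma theta_lt : (theta p d < d)%N.
Proof. rewrite /theta; case: ifP => _; [rewrite ltn_half_double|]; lia. Qed.

Lemma Cs_chain j a : Cs j.+1 a = (chain p d omega j a (theta p d))%:R.
Proof.
elim: j a => [|j IH] a.
  rewrite CsS (bigD1 (Ordinal theta_lt)) //= Cs0 (delta_theta theta_lt) eqxx mulr1 big1 ?addr0 //.
  move=> l hl; rewrite Cs0 delta_theta //.
  rewrite (_ : (theta p d == l) = false) ?mulr0 //.
  by apply/negbTE; apply: contra hl => /eqP h; apply/eqP; apply: val_inj.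
rewrite CsS /= natr_sum; apply: eq_bigr => l _; by rewrite IH natrM.
Qed.

Lemma main_sec nu : (nu < d)%N ->
  let F0 := fdeg p d in
  let TH := theta p d in
  let N0 := nkn p d omega zeta in
  let C0 := cyc p d omega in
  let CH := chain p d omega in
  [/\ N0 1%N nu + F0%:R = p%:R * (TH == nu)%:R,
      N0 2%N nu + (F0 ^ 2)%:R = p%:R * (C0 nu TH)%:R,
      N0 3%N nu + (F0 ^ 3)%:R =
        p%:R * (\sum_(i < d) C0 nu i * C0 i TH)%N%:R
        + F0%:R * (TH == 0%N)%:R * (N0 1%N nu + F0%:R),
      N0 4%N nu + (F0 ^ 4)%:R =
        p%:R * (\sum_(i < d) \sum_(j < d) C0 nu i * C0 i j * C0 j TH)%N%:R
        + F0%:R * (TH == 0%N)%:R * (N0 2%N nu + (F0 ^ 2)%:R)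
        + F0%:R * (C0 0%N TH)%:R * (N0 1%N nu + F0%:R)
    & forall k : nat, (5 <= k)%N ->
      N0 k nu + (F0 ^ k)%:R =
        p%:R * (CH (k - 2)%N nu TH)%:R
        + F0%:R * (TH == 0%N)%:R * (N0 (k - 2)%N nu + (F0 ^ (k - 2)%N)%:R)
        + F0%:R * (C0 0%N TH)%:R * (N0 (k - 3)%N nu + (F0 ^ (k - 3)%N)%:R)
        + \sum_(4 <= j < k) F0%:R * (CH (j - 3)%N 0%N TH)%:R
                               * (N0 (k - j)%N nu + (F0 ^ (k - j)%N)%:R)].
Proof.
move=> hnu F0 TH N0 C0 CH.
have hA k : N0 k nu + (F0 ^ k)%:R = A k nu by [].
have hA1 : N0 1 nu + F0%:R = A 1 nu by rewrite /A expn1.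
have d0 : (0 < d)%N by lia.
have C00 : Cs 0 0 = (TH == 0%N)%:R by rewrite Cs0 delta_theta.
have C10 : Cs 1 0 = (C0 0%N TH)%:R by rewrite Cs_chain.
split.
- rewrite hA1 A_closed big_ord_recr big_ord1 /=.
  by rewrite T0 mulr0 addr0 Cs0 delta_theta // mulrC.
- rewrite hA (A_main 0) big_ord1 subnn A0 !mulr0 addr0 Cs_chain.
  by [].
- rewrite hA1 !hA (A_main 1) big_ord_recr big_ord1 /= subnn subn0 A0 mulr0 addr0.
  rewrite Cs_chain C00 /=; ring.
- rewrite hA1 !hA (A_main 2) big_ord_recr big_ord_recr big_ord1 /= subnn subn0 A0 mulr0 addr0.
  have e4 : chain p d omega 2 nu (theta p d) =
      (\sum_(i < d) \sum_(j < d) C0 nu i * C0 i j * C0 j TH)%N.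
    rewrite /=; apply: eq_bigr => i _; rewrite big_distrr /=.
    by apply: eq_bigr => j _; rewrite mulnA.
  rewrite Cs_chain e4 C00 C10 (_ : (2 - 1 = 1)%N) //; ring.
move=> k hk.
have [q ->] : exists q, k = q.+4.+1 by exists (k - 5)%N; lia.
rewrite !hA (_ : (q.+4.+1 - 2 = q.+3)%N); last by lia.
rewrite (_ : (q.+4.+1 - 3 = q.+2)%N); last by lia.
rewrite (A_main q.+3) big_ord_recl big_ord_recl big_ord_recr /= subnn A0 mulr0 addr0.
rewrite Cs_chain C00 C10 subn0 (_ : (q.+3 - 1 = q.+2)%N) //.
have hs : F0%:R * \sum_(i < q.+1) Cs (bump 0 (bump 0 i)) 0 * A (q.+3 - bump 0 (bump 0 i)) nu
   = \sum_(4 <= j < q.+4.+1) F0%:R * (CH (j - 3)%N 0%N TH)%:R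
                               * (N0 (q.+4.+1 - j)%N nu + (F0 ^ (q.+4.+1 - j)%N)%:R).
  rewrite (big_addn 0 _ 4) (_ : (q.+4.+1 - 4 = q.+1)%N) // big_mkord big_distrr /=.
  apply: eq_bigr => i _; rewrite hA /bump /= !add1n Cs_chain.
  have hi := ltn_ord i.
  rewrite (_ : (i + 4 - 3 = i.+1)%N); last by lia.
  rewrite (_ : (q.+4.+1 - (i + 4) = q.+3 - i.+2)%N); last by lia.
  by rewrite mulrA.
rewrite -hs; ring.
Qed.
End L.

Unset Implicit Arguments.
Set Strict Implicit.

Theorem lemma2 (p d : nat) (omega : 'F_p) (zeta : algC) :
  prime p -> (2 < p)%N -> (2 <= d)%N -> (d %| p.-1)%N ->
  (p.-1).-primitive_root omega -> p.-primitive_root zeta ->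
  forall nu : nat, (nu < d)%N ->
  let f := fdeg p d in
  let th := theta p d in
  let n := nkn p d omega zeta in
  let c := cyc p d omega in
  let ch := chain p d omega in
  [/\ n 1%N nu + f%:R = p%:R * (th == nu)%:R,
      n 2%N nu + (f ^ 2)%:R = p%:R * (c nu th)%:R,
      n 3%N nu + (f ^ 3)%:R =
        p%:R * (\sum_(i < d) c nu i * c i th)%N%:R
        + f%:R * (th == 0%N)%:R * (n 1%N nu + f%:R),
      n 4%N nu + (f ^ 4)%:R =
        p%:R * (\sum_(i < d) \sum_(j < d) c nu i * c i j * c j th)%N%:R
        + f%:R * (th == 0%N)%:R * (n 2%N nu + (f ^ 2)%:R)
        + f%:R * (c 0%N th)%:R * (n 1%N nu + f%:R)
    & forall k : nat, (5 <= k)%N ->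
      n k nu + (f ^ k)%:R =
        p%:R * (ch (k - 2)%N nu th)%:R
        + f%:R * (th == 0%N)%:R * (n (k - 2)%N nu + (f ^ (k - 2)%N)%:R)
        + f%:R * (c 0%N th)%:R * (n (k - 3)%N nu + (f ^ (k - 3)%N)%:R)
        + \sum_(4 <= j < k) f%:R * (ch (j - 3)%N 0%N th)%:R
                               * (n (k - j)%N nu + (f ^ (k - j)%N)%:R)].
Proof.
move=> pp p2 d2 dd Hom Hz nu hnu.
exact: (main_sec pp p2 d2 dd Hom Hz hnu).
Qed.
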